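(* There is a unique function $h$ such that $h\neq\underline{\mathfrak{0}}$ and $h(x)=\underline{\mathfrak{0}}$ for every $x\neq h$. (This function is denoted $\varphi_0$; one has $\varphi_0=\underline{\mathfrak{0}}\circ\underline{\mathfrak{0}}$.)
   Context: Flow is a first-order theory with equality whose only non-logical symbol is a binary function symbol written $f(x)$; all objects are called functions. Axioms: (F1) $\forall f\forall g\big(((f(g)=f\wedge g(f)=g)\vee(f(g)=g\wedge g(f)=f))\Rightarrow f=g\big)$; (F2) $\forall f\,(f(f)=f)$; (F3) there is a (necessarily unique) $\underline{\mathfrak{1}}$ with $\underline{\mathfrak{1}}(x)=x$ for all $x$; (F4) there is a (necessarily unique) $\underline{\mathfrak{0}}$ with $\underline{\mathfrak{0}}(x)=\underline{\mathfrak{0}}$ for all $x$. Definition ($\mathfrak{F}$-composition): given $f,g$, a function $h$ is the composition $f\circ g$ iff (i) $h\neq\underline{\mathfrak{0}}$; (ii) for all $x$ with $x\neq f$, $x\neq g$, $x\neq h$: $h(x)=f(g(x))$; (iii) if $h\neq f$ then $h(f)=\underline{\mathfrak{0}}$; (iv) if $h\neq g$ then $h(g)=\underline{\mathfrak{0}}$; (v) if $g\neq h$, $f\neq h$, $g\neq\underline{\mathfrak{1}}$ and $f\neq\underline{\mathfrak{1}}$, then $f(g(h))=\underline{\mathfrak{0}}$ or $g(h)=\underline{\mathfrak{0}}$. Axiom (F5, $\mathfrak{F}$-Composition): for all $f,g$ there is exactly one $h$ with $h=f\circ g$. *)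

(* Defs.v *)
(* plain Rocq. Flow models: a carrier T with a binary
   operation app, where [app f x] stands for f(x). *)

Section FlowDefs.
Variable T : Type.
Variable app : T -> T -> T.

Definition flow_F1 : Prop :=
  forall f g : T,
    ((app f g = f /\ app g f = g) \/ (app f g = g /\ app g f = f)) -> f = g.

Definition flow_F2 : Prop := forall f : T, app f f = f.

Definition is_one (one : T) : Prop := forall x : T, app one x = x.

Definition is_zero (zero : T) : Prop := forall x : T, app zero x = zero.

Definition is_comp (one zero f g h : T) : Prop :=
  h <> zero /\
  (forall x : T, x <> f -> x <> g -> x <> h -> app h x = app f (app g x)) /\
  (h <> f -> app h f = zero) /\
  (h <> g -> app h g = zero) /\
  (g <> h -> f <> h -> g <> one -> f <> one ->
     app f (app g h) = zero \/ app g h = zero).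

Definition flow_F5 (one zero : T) : Prop :=
  forall f g : T, exists! h : T, is_comp one zero f g h.

End FlowDefs.

(* Main.v *)
Require Import Defs.
From Stdlib Require Import Classical.

Theorem theorem6 (T : Type) (app : T -> T -> T) (one zero : T)
  (F1 : flow_F1 T app) (F2 : flow_F2 T app)
  (F3 : is_one T app one) (F4 : is_zero T app zero)
  (F5 : flow_F5 T app one zero) :
  (exists! h : T, h <> zero /\ forall x : T, x <> h -> app h x = zero) /\
  (forall h : T, (h <> zero /\ forall x : T, x <> h -> app h x = zero) ->
     is_comp T app one zero zero zero h).
Proof.
  assert (Hc : forall h : T, (h <> zero /\ forall x : T, x <> h -> app h x = zero) ->
     is_comp T app one zero zero zero h).
  { intros h [Hz Hx]. unfold is_comp.
    split; [exact Hz|].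
    split; [intros x _ _ Hxh; rewrite Hx by exact Hxh; rewrite !F4; reflexivity|].
    split; [intros _; apply Hx; intro E; apply Hz; symmetry; exact E|].
    split; [intros _; apply Hx; intro E; apply Hz; symmetry; exact E|].
    intros _ _ _ _. left. apply F4. }
  split; [|exact Hc].
  destruct (F5 zero zero) as [h [Hh Hu]].
  exists h. destruct Hh as [Hz [Hx [H3 [H4 H5]]]].
  split.
  - split; [exact Hz|]. intros x Hxh.
    destruct (classic (x = zero)) as [E|E].
    + subst x. apply H3. exact Hz.
    + rewrite Hx by assumption. rewrite !F4. reflexivity.
  - intros h' Hp. apply Hu. apply Hc. exact Hp.
Qed.
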